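(* Let $R$ be a principal ideal domain and let $P$ be a lattice equipped with a compatible abelian group structure. Let $M=\bigoplus_{a\in P}M_a$ be a persistence module over $R$ indexed by $P$, viewed as a $P$-graded $R[U_0]$-module, such that each $M_a$ is a finitely generated $R$-module. Then $M$ is graded projective if and only if $M$ is graded free.
   Context: A lattice is a partially ordered set $(P,\le)$ in which every two elements $x,y$ have a join $x\vee y$ (least upper bound) and a meet $x\wedge y$ (greatest lower bound). $P$ has a compatible abelian group structure if $(P,+,0)$ is an abelian group and $a\le b$ implies $a+c\le b+c$ for all $a,b,c\in P$. Let $U_0=\{s\in P: s\ge 0\}$, a commutative monoid under $+$, and let $R[U_0]$ be its monoid ring: elements are finite formal sums $\sum_{s\in U_0}c_st^s$ with $c_s\in R$, $t^st^{s'}=t^{s+s'}$, graded by $\deg(ct^s)=s$. A persistence module over $R$ indexed by $P$ is a functor from $P$ (viewed as a category with a morphism $a\to b$ iff $a\le b$) to $R$-modules; equivalently a $P$-graded $R[U_0]$-module $M=\bigoplus_{a\in P}M_a$, where for $m\in M_a$ and $s\in U_0$, $t^s\cdot m$ is the image of $m$ under the structure map $M_a\to M_{a+s}$. Morphisms are degree-preserving $R[U_0]$-homomorphisms. $M$ is graded free if it has an $R[U_0]$-basis of homogeneous elements; $M$ is graded projective if it is a graded direct summand of a graded free module (equivalently, it has the lifting property against graded epimorphisms in the category of graded modules). *)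

(* Defs.v *)
From HB Require Import structures.
From mathcomp Require Import all_boot all_order all_algebra.
Set Implicit Arguments. Unset Strict Implicit. Unset Printing Implicit Defensive.
Import GRing.Theory.
Local Open Scope ring_scope.

Definition is_ideal (R : comPzRingType) (I : R -> Prop) : Prop :=
  [/\ I 0, (forall x y, I x -> I y -> I (x + y)) & (forall r x, I x -> I (r * x))].

Definition PID (R : idomainType) : Prop :=
  forall I : R -> Prop, is_ideal I -> exists g : R, forall x, I x <-> exists r, x = r * g.

Definition is_lattice_order (P : Type) (le : rel P) : Prop :=
  [/\ (forall x, le x x),
      (forall x y, le x y -> le y x -> x = y),
      (forall x y z, le x y -> le y z -> le x z),
      (forall x y, exists j, [/\ le x j, le y j & forall z, le x z -> le y z -> le j z])
    & (forall x y, exists m, [/\ le m x, le m y & forall z, le z x -> le z y -> le z m])].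

Definition compatible (P : zmodType) (le : rel P) : Prop :=
  forall a b c, le a b -> le (a + c) (b + c).

(* Persistence module over R indexed by (P, le): a functor from the poset P
   to R-modules. The structure map pm_map a b is only meaningful (and only
   constrained) when le a b. *)
Record pmod (R : pzRingType) (P : Type) (le : rel P) := PMod {
  pm_obj :> P -> lmodType R;
  pm_map : forall a b, {linear pm_obj a -> pm_obj b};
  pm_id : forall a x, le a a -> pm_map a a x = x;
  pm_comp : forall a b c x, le a b -> le b c ->
     pm_map a c x = pm_map b c (pm_map a b x)
}.

(* Morphisms of persistence modules = degree-preserving R[U_0]-homomorphisms. *)
Definition pmod_hom (R : pzRingType) (P : Type) (le : rel P) (M N : @pmod R P le)
  (f : forall a, M a -> N a) : Prop :=
  (forall a, linear (f a)) /\
  (forall a b x, le a b -> f b (pm_map M a b x) = pm_map N a b (f a x)).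

Definition fg_module (R : pzRingType) (V : lmodType R) : Prop :=
  exists s : seq V, forall x : V, exists c : seq R,
    x = \sum_(p <- zip s c) p.2 *: p.1.

(* Graded free: there is a family of homogeneous elements gen i in degree
   deg i forming an R[U_0]-basis. Unfolded degreewise: since t^s acts from
   M_b to M_(b+s) by the structure map, each M_a is the free R-module on the
   elements pm_map (deg i) a (gen i) with le (deg i) a. *)
Definition graded_free (R : pzRingType) (P : Type) (le : rel P) (M : @pmod R P le) : Prop :=
  exists (I : eqType) (deg : I -> P) (gen : forall i, M (deg i)),
    (forall a (x : M a), exists (s : seq I) (c : seq R),
        all (fun i => le (deg i) a) s /\
        x = \sum_(p <- zip s c) p.2 *: pm_map M (deg p.1) a (gen p.1)) /\
    (forall a (s : seq I) (c : seq R),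
        uniq s -> size c = size s -> all (fun i => le (deg i) a) s ->
        \sum_(p <- zip s c) p.2 *: pm_map M (deg p.1) a (gen p.1) = 0 ->
        all (fun r => r == 0) c).

Definition graded_projective (R : pzRingType) (P : Type) (le : rel P) (M : @pmod R P le) : Prop :=
  exists (F : @pmod R P le) (i : forall a, M a -> F a) (p : forall a, F a -> M a),
    [/\ graded_free F, pmod_hom i, pmod_hom p & forall a x, p a (i a x) = x].

(* Main.v *)
Require Import Defs.
From mathcomp Require Import all_boot all_order all_algebra.
From Stdlib Require Import IndefiniteDescription.
Set Implicit Arguments. Unset Strict Implicit. Unset Printing Implicit Defensive.
Import GRing.Theory.
Local Open Scope ring_scope.

Section PIDpart.
Variables (R : idomainType) (hR : PID R) (J : eqType).

Definition vdef : J -> R := fun _ => 0.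

Lemma pid_basis (T : seq J) (S : (J -> R) -> Prop) :
  S (fun _ => 0) -> (forall u v, S u -> S v -> S (fun j => u j + v j)) ->
  (forall r u, S u -> S (fun j => r * u j)) ->
  (forall v, S v -> forall j, j \notin T -> v j = 0) ->
  exists bs : seq (J -> R),
    (forall i, (i < size bs)%N -> S (nth vdef bs i)) /\
    (forall v, S v -> exists c : seq R, forall j, v j = \sum_(i < size bs) c`_i * nth vdef bs i j) /\
    (forall c : seq R, (forall j, \sum_(i < size bs) c`_i * nth vdef bs i j = 0) ->
        forall i, (i < size bs)%N -> c`_i = 0).
Proof.
elim: T S => [|t T IH] S S0 SD SZ Ssup.
  exists [::]; split; first by [].
  split; last by [].
  move=> v Sv; exists [::] => j; rewrite big_ord0; exact: Ssup.
pose Id := fun x : R => exists v, S v /\ v t = x.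
have hId : is_ideal Id.
  split.
  - by exists (fun _ => 0).
  - move=> x y [u [Su <-]] [v [Sv <-]]; exists (fun j => u j + v j); split => //; exact: SD.
  - move=> r x [u [Su <-]]; exists (fun j => r * u j); split => //; exact: SZ.
have [g Hg] := hR hId.
have [w [Sw wt]] : Id g by apply/Hg; exists 1; rewrite mul1r.
pose S' := fun v => S v /\ v t = 0.
have [bs [Sbs [Spbs Ibs]]] : exists bs : seq (J -> R),
    (forall i, (i < size bs)%N -> S' (nth vdef bs i)) /\
    (forall v, S' v -> exists c : seq R, forall j, v j = \sum_(i < size bs) c`_i * nth vdef bs i j) /\
    (forall c : seq R, (forall j, \sum_(i < size bs) c`_i * nth vdef bs i j = 0) ->
        forall i, (i < size bs)%N -> c`_i = 0).
  apply: IH.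
  - by split.
  - by move=> u v [Su ut] [Sv vt]; split; [exact: SD | rewrite ut vt addr0].
  - by move=> r u [Su ut]; split; [exact: SZ | rewrite ut mulr0].
  - move=> v [Sv vt] j; case: (eqVneq j t) => [->|jt] // jT.
    by apply: Ssup => //; rewrite in_cons negb_or jt.
case: (eqVneq g 0) => [g0|gn0].
  exists bs; split; first by move=> i /Sbs [].
  split => //.
  move=> v Sv; apply: Spbs; split => //.
  have [r ->] : exists r, v t = r * g by apply/Hg; exists v.
  by rewrite g0 mulr0.
exists (w :: bs); split.
  by case=> [|i] /=; [move=> _; exact: Sw | move/Sbs => []].
split.
  move=> v Sv.
  have [r vr] : exists r, v t = r * g by apply/Hg; exists v.
  have S'v : S' (fun j => v j + - r * w j).
    split; first by apply: SD => //; exact: SZ.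
    by rewrite vr wt mulNr subrr.
  have [c Hc] := Spbs _ S'v.
  exists (r :: c) => j /=; rewrite big_ord_recl /=.
  rewrite -(Hc j) addrCA mulNr subrr addr0 //.

move=> c Hc.
have c0 : c`_0 = 0.
  have := Hc t; rewrite /= big_ord_recl /= wt.
  rewrite big1 ?addr0; last by move=> i _; have [_ ->] := Sbs _ (ltn_ord i); rewrite mulr0.
  by move/eqP; rewrite mulf_eq0 (negbTE gn0) orbF => /eqP.
have Hb : forall i, (i < size bs)%N -> (behead c)`_i = 0.
  apply: Ibs => j; have := Hc j; rewrite /= big_ord_recl /= c0 mul0r add0r.
  by rewrite (eq_bigr (fun i : 'I_(size bs) => (behead c)`_i * nth vdef bs i j)) // => i _; rewrite nth_behead.
case=> [|i] //= ilt.
by rewrite -nth_behead; apply: Hb.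
Qed.

End PIDpart.

Lemma sum_pred1_seq (T : eqType) (V : nmodType) (K : seq T) (x : T) (f : T -> V) :
  uniq K -> x \in K -> \sum_(j <- K | j == x) f j = f x.
Proof.
move=> uK xK; rewrite (big_rem x) //= eqxx big_seq_cond big1 ?addr0 // => j /andP [jr /eqP jx].
by move: jr; rewrite jx mem_rem_uniqF.
Qed.

Section FreePart.
Variables (R : idomainType) (hR : PID R) (P : eqType) (le : rel P).
Hypothesis htrans : forall x y z, le x y -> le y z -> le x z.
Variables (F : @pmod R P le) (J : eqType) (dg : J -> P) (g : forall j, F (dg j)).
Hypothesis Fspan : forall a (x : F a), exists (s : seq J) (c : seq R),
        all (fun i => le (dg i) a) s /\
        x = \sum_(p <- zip s c) p.2 *: pm_map F (dg p.1) a (g p.1).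
Hypothesis Findep : forall a (s : seq J) (c : seq R),
        uniq s -> size c = size s -> all (fun i => le (dg i) a) s ->
        \sum_(p <- zip s c) p.2 *: pm_map F (dg p.1) a (g p.1) = 0 ->
        all (fun r => r == 0) c.

Definition G a j : F a := pm_map F (dg j) a (g j).
Definition cmb a (l : seq (J * R)) : F a := \sum_(q <- l) q.2 *: G a q.1.
Definition coef (l : seq (J * R)) j : R := \sum_(q <- l | q.1 == j) q.2.
Definition allle a (l : seq (J * R)) := all (fun q => le (dg q.1) a) l.

Lemma cmb_cat a l1 l2 : cmb a (l1 ++ l2) = cmb a l1 + cmb a l2.
Proof. by rewrite /cmb big_cat. Qed.
Lemma coef_cat l1 l2 j : coef (l1 ++ l2) j = coef l1 j + coef l2 j.
Proof. by rewrite /coef big_cat. Qed.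
Definition sc r (l : seq (J * R)) := [seq (q.1, r * q.2) | q <- l].
Lemma cmb_sc a r l : cmb a (sc r l) = r *: cmb a l.
Proof. by rewrite /cmb big_map scaler_sumr; apply: eq_bigr => q _; rewrite scalerA. Qed.
Lemma coef_sc r l j : coef (sc r l) j = r * coef l j.
Proof. by rewrite /coef big_map mulr_sumr. Qed.
Lemma allle_cat a l1 l2 : allle a (l1 ++ l2) = allle a l1 && allle a l2.
Proof. by rewrite /allle all_cat. Qed.
Lemma allle_sc a r l : allle a (sc r l) = allle a l.
Proof. by rewrite /allle all_map. Qed.

Lemma coef_notin l j : j \notin map fst l -> coef l j = 0.
Proof.
move=> jn; rewrite /coef big_seq_cond big1 // => q /andP [ql /eqP qj].
by move: jn; rewrite -qj (map_f fst ql).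
Qed.

Lemma regroup a l (K : seq J) : uniq K -> {subset map fst l <= K} ->
  cmb a l = \sum_(j <- K) coef l j *: G a j.
Proof.
move=> uK sK; rewrite /coef.
under [RHS]eq_bigr => j _ do rewrite scaler_suml.
rewrite (@exchange_big_dep _ _ _ _ _ _ _ xpredT _ xpredT) //=.
rewrite /cmb; apply: eq_big_seq => q ql.
rewrite (eq_bigl (fun j => j == q.1)); last by move=> j; rewrite eq_sym.
by rewrite sum_pred1_seq // sK // (map_f fst ql).
Qed.

Lemma zip_self (T : Type) (K : seq J) (f : J -> T) : zip K (map f K) = map (fun j => (j, f j)) K.
Proof. by elim: K => //= j K ->. Qed.

Lemma cmb0_coef a l : allle a l -> cmb a l = 0 -> forall j, coef l j = 0.
Proof.
move=> hl h0 j.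
set K := undup (map fst l).
have := @Findep a K (map (coef l) K) (undup_uniq _) (size_map _ _).
have allK : all (fun i => le (dg i) a) K.
  apply/allP => i; rewrite mem_undup => /mapP [q ql ->]; exact: (allP hl q ql).
move/(_ allK).
rewrite zip_self big_map /=.
rewrite -regroup ?undup_uniq // => [|i]; last by rewrite mem_undup.
move/(_ h0) => /allP hz.
case: (boolP (j \in K)) => jK.
  by apply/eqP; apply: hz; apply: map_f.
by apply: coef_notin; move: jK; rewrite mem_undup.
Qed.

Lemma cmb_inj a l1 l2 : allle a l1 -> allle a l2 -> cmb a l1 = cmb a l2 -> forall j, coef l1 j = coef l2 j.
Proof.
move=> h1 h2 he j; apply/eqP; rewrite -subr_eq0; apply/eqP.
have := @cmb0_coef a (l1 ++ sc (-1) l2); rewrite allle_cat allle_sc h1 h2 cmb_cat cmb_sc.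
rewrite he scaleN1r subrr => /(_ isT erefl j).
by rewrite coef_cat coef_sc mulN1r.
Qed.

Lemma all_zip (s : seq J) (c : seq R) (p : pred J) : all p s -> all (fun q => p q.1) (zip s c).
Proof. by elim: s c => [|x s IH] [|r c] //= /andP [-> hs]; rewrite IH. Qed.

Lemma F1 a (z : F a) : exists l, allle a l /\ z = cmb a l.
Proof.
have [s [c [hs ->]]] := Fspan z.
by exists (zip s c); split; [exact: (all_zip c hs)|].
Qed.

Definition rep a (z : F a) := proj1_sig (constructive_indefinite_description _ (F1 z)).
Lemma repP a (z : F a) : allle a (rep z) /\ z = cmb a (rep z).
Proof. exact: proj2_sig (constructive_indefinite_description _ (F1 z)). Qed.

Definition crd a (z : F a) j := coef (rep z) j.

Lemma crd_cmb a l : allle a l -> forall j, crd (cmb a l) j = coef l j.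
Proof.
move=> hl j; have [h1 h2] := repP (cmb a l).
by apply: (cmb_inj h1 hl); rewrite -h2.
Qed.

Lemma crdD a (z1 z2 : F a) j : crd (z1 + z2) j = crd z1 j + crd z2 j.
Proof.
have [h1 e1] := repP z1; have [h2 e2] := repP z2.
rewrite {1}e1 {1}e2 -cmb_cat crd_cmb ?coef_cat //.
by rewrite allle_cat h1 h2.
Qed.

Lemma crdZ a r (z : F a) j : crd (r *: z) j = r * crd z j.
Proof.
have [h1 e1] := repP z.
by rewrite {1}e1 -cmb_sc crd_cmb ?coef_sc // allle_sc.
Qed.

Lemma crd0 a j : crd (0 : F a) j = 0.
Proof. by rewrite -(scale0r (0 : F a)) crdZ mul0r. Qed.

Lemma crd_sum a (I : Type) (s : seq I) (f : I -> F a) j :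
  crd (\sum_(i <- s) f i) j = \sum_(i <- s) crd (f i) j.
Proof.
elim: s => [|x s IH]; first by rewrite !big_nil crd0.
by rewrite !big_cons crdD IH.
Qed.

Lemma pm_cmb b a l : le b a -> allle b l -> pm_map F b a (cmb b l) = cmb a l.
Proof.
move=> hba hl; rewrite /cmb linear_sum; apply: eq_big_seq => q ql.
rewrite linearZ /G -pm_comp //; exact: (allP hl q ql).
Qed.

Lemma allle_trans b a l : le b a -> allle b l -> allle a l.
Proof. by move=> hba /allP hl; apply/allP => q /hl h; exact: htrans h hba. Qed.

Lemma crd_pm b a (z : F b) j : le b a -> crd (pm_map F b a z) j = crd z j.
Proof.
move=> hba; have [h1 e1] := repP z.
rewrite {1}e1 pm_cmb // crd_cmb //; exact: allle_trans h1.
Qed.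

Lemma crd_le a (z : F a) j : crd z j != 0 -> le (dg j) a.
Proof.
have [h1 _] := repP z.
rewrite /crd; case: (boolP (j \in map fst (rep z))) => [/mapP [q ql ->] _|jn].
  exact: (allP h1 q ql).
by rewrite coef_notin // eqxx.
Qed.

Lemma crd_expand a (z : F a) :
  z = \sum_(k <- undup (map fst (rep z)) | crd z k != 0) crd z k *: G a k.
Proof.
have [h1 e1] := repP z.
rewrite {1}e1 (@regroup _ _ (undup (map fst (rep z))) (undup_uniq _)) => [|i]; last by rewrite mem_undup.
rewrite [RHS]big_mkcond /=; apply: eq_bigr => k _.
by rewrite /crd; case: eqP => // ->; rewrite scale0r.
Qed.

Lemma crd_G a j : le (dg j) a -> forall k, crd (G a j) k = if k == j then 1 else 0.
Proof.
move=> hj k.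
have -> : G a j = cmb a [:: (j, 1)] by rewrite /cmb big_seq1 scale1r.
rewrite crd_cmb /= ?hj // /coef big_cons big_nil /= addr0 eq_sym.
by case: eqP.
Qed.


Lemma lin0 (U V : lmodType R) (f : U -> V) : linear f -> f 0 = 0.
Proof.
move=> hf; have := hf 1 0 0; rewrite !scale1r addr0 => h.
by apply: (addrI (f 0)); rewrite addr0 -h.
Qed.
Lemma linD (U V : lmodType R) (f : U -> V) : linear f -> forall x y, f (x + y) = f x + f y.
Proof. by move=> hf x y; have := hf 1 x y; rewrite !scale1r. Qed.
Lemma linZ (U V : lmodType R) (f : U -> V) : linear f -> forall r x, f (r *: x) = r *: f x.
Proof. by move=> hf r x; have := hf r x 0; rewrite !addr0 lin0 // addr0. Qed.
Lemma linN (U V : lmodType R) (f : U -> V) : linear f -> forall x, f (- x) = - f x.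
Proof. by move=> hf x; rewrite -scaleN1r linZ // scaleN1r. Qed.
Lemma lin_sum (U V : lmodType R) (f : U -> V) (I : Type) (s : seq I) (h : I -> U) :
  linear f -> f (\sum_(i <- s) h i) = \sum_(i <- s) f (h i).
Proof.
move=> hf; elim: s => [|x s IH]; first by rewrite !big_nil lin0.
by rewrite !big_cons linD // IH.
Qed.

Hypotheses (hrefl : forall x, le x x) (hanti : forall x y, le x y -> le y x -> x = y).
Unset Implicit Arguments.
Variables (M : @pmod R P le) (ip : forall a, M a -> F a) (pp : forall a, F a -> M a).
Set Implicit Arguments.
Hypotheses (hip : pmod_hom ip) (hpp : pmod_hom pp) (hpi : forall a x, pp a (ip a x) = x).
Hypothesis hfg : forall a, fg_module (M a).

Lemma mem_zip1 (A B : eqType) (s : seq A) (t : seq B) p : p \in zip s t -> p.1 \in s.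
Proof.
elim: s t => [|x s IH] [|y t] //=; rewrite !in_cons => /orP [/eqP -> |/IH ->].
  by rewrite eqxx.
by rewrite orbT.
Qed.

Lemma supp a : exists T : seq J, forall (y : M a) k, crd (ip a y) k != 0 -> k \in T.
Proof.
have [sm hsm] := hfg a.
exists (flatten [seq map fst (rep (ip a m)) | m <- sm]) => y k.
apply: contraR => kT.
have [c ->] := hsm y.
rewrite lin_sum; last exact: hip.1.
rewrite crd_sum big_seq big1 // => p pin.
rewrite linZ; last exact: hip.1.
rewrite crdZ /crd coef_notin ?mulr0 //.
apply: contra kT => kin; apply/flattenP.
exists (map fst (rep (ip a p.1))) => //; apply: map_f; exact: mem_zip1 pin.
Qed.

Definition top a (m : M a) j := if dg j == a then crd (ip a m) j else 0.

Definition Qa a (bs : seq (J -> R)) (xs : seq (M a)) :=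
  [/\ size xs = size bs,
      (forall i, (i < size bs)%N -> forall j, top (nth 0 xs i) j = nth (@vdef R J) bs i j),
      (forall m : M a, exists c : seq R, forall j, top m j = \sum_(i < size bs) c`_i * nth (@vdef R J) bs i j)
    & (forall c : seq R, (forall j, \sum_(i < size bs) c`_i * nth (@vdef R J) bs i j = 0) ->
        forall i, (i < size bs)%N -> c`_i = 0)].

Lemma seq_choice (X : Type) (x0 : X) (n : nat) (Q : nat -> X -> Prop) :
  (forall i, (i < n)%N -> exists x, Q i x) -> exists xs : seq X, size xs = n /\ forall i, (i < n)%N -> Q i (nth x0 xs i).
Proof.
elim: n Q => [|n IH] Q h; first by exists [::].
have [x hx] := h 0%N isT.
have [xs [sx hxs]] := IH (fun i => Q i.+1) (fun i hi => h i.+1 hi).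
by exists (x :: xs); split; [rewrite /= sx | case].
Qed.

Lemma topD a (m1 m2 : M a) j : top (m1 + m2) j = top m1 j + top m2 j.
Proof. by rewrite /top; case: ifP; rewrite ?addr0 // linD ?crdD //; exact: hip.1. Qed.
Lemma topZ a r (m : M a) j : top (r *: m) j = r * top m j.
Proof. by rewrite /top; case: ifP; rewrite ?mulr0 // linZ ?crdZ //; exact: hip.1. Qed.
Lemma top0 a j : top (0 : M a) j = 0.
Proof. by rewrite -(scale0r (0 : M a)) topZ mul0r. Qed.

Lemma deg_basis a : exists p : seq (J -> R) * seq (M a), Qa p.1 p.2.
Proof.
have [T hT] := supp a.
pose S := fun v : J -> R => exists m : M a, forall j, v j = top m j.
have h0 : S (fun _ => 0) by exists 0 => j; rewrite top0.
have hD : forall u v, S u -> S v -> S (fun j => u j + v j).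
  by move=> u v [m1 h1] [m2 h2]; exists (m1 + m2) => j; rewrite topD h1 h2.
have hZ : forall r u, S u -> S (fun j => r * u j).
  by move=> r u [m1 h1]; exists (r *: m1) => j; rewrite topZ h1.
have hs : forall v, S v -> forall j, j \notin T -> v j = 0.
  move=> v [m hm] j jT; rewrite hm /top; case: ifP => // _.
  by apply/eqP; apply: contraR jT; exact: hT.
have [bs [Sbs [Spbs Ibs]]] := @pid_basis R hR J T S h0 hD hZ hs.
have [xs [sxs hxs]] := @seq_choice (M a) 0 (size bs) (fun i m => forall j, nth (@vdef R J) bs i j = top m j) Sbs.
exists (bs, xs); split => //=.
- by move=> i /hxs h j; rewrite h.
- by move=> m; apply: Spbs; exists m.
Qed.

Definition xsbs a := proj1_sig (constructive_indefinite_description _ (deg_basis a)).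
Definition bs a := (xsbs a).1.
Definition xs a := (xsbs a).2.
Lemma QP a : Qa (bs a) (xs a).
Proof. exact: proj2_sig (constructive_indefinite_description _ (deg_basis a)). Qed.

Definition I := {x : P * nat | (x.2 < size (xs x.1))%N}.
Definition deg (x : I) : P := (val x).1.
Definition idx (x : I) : nat := (val x).2.
Definition gen (x : I) : M (deg x) := nth 0 (xs (val x).1) (val x).2.

Definition Sp a (y : M a) := exists l : seq (I * R), all (fun q => le (deg q.1) a) l /\
   y = \sum_(q <- l) q.2 *: pm_map M (deg q.1) a (gen q.1).

Lemma Sp0 a : Sp (0 : M a).
Proof. by exists [::]; rewrite big_nil. Qed.
Lemma SpD a (y1 y2 : M a) : Sp y1 -> Sp y2 -> Sp (y1 + y2).
Proof.
move=> [l1 [h1 ->]] [l2 [h2 ->]]; exists (l1 ++ l2); split; first by rewrite all_cat h1 h2.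
by rewrite big_cat.
Qed.
Lemma SpZ a r (y : M a) : Sp y -> Sp (r *: y).
Proof.
move=> [l [h ->]]; exists [seq (q.1, r * q.2) | q <- l]; split; first by rewrite all_map.
by rewrite big_map scaler_sumr; apply: eq_bigr => q _; rewrite scalerA.
Qed.
Lemma Sp_sum a (A : Type) (s : seq A) (f : A -> M a) : (forall i, Sp (f i)) -> Sp (\sum_(i <- s) f i).
Proof.
move=> h; elim: s => [|x s IH]; first by rewrite big_nil; exact: Sp0.
by rewrite big_cons; apply: SpD.
Qed.
Lemma Sp_pm b a (y : M b) : le b a -> Sp y -> Sp (pm_map M b a y).
Proof.
move=> hba [l [h ->]]; exists l; split.
  by apply/allP => q /(allP h) hq; exact: htrans hq hba.
rewrite linear_sum; apply: eq_big_seq => q ql.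
by rewrite linearZ -pm_comp //; exact: (allP h q ql).
Qed.
Lemma Sp_gen (x : I) : Sp (gen x).
Proof.
exists [:: (x, 1)]; split; first by rewrite /= hrefl.
by rewrite big_seq1 scale1r pm_id.
Qed.

Lemma Sp_sum_seq a (A : eqType) (s : seq A) (f : A -> M a) :
  (forall i, i \in s -> Sp (f i)) -> Sp (\sum_(i <- s) f i).
Proof.
move=> h; rewrite big_seq big_mkcond /=; apply: Sp_sum => i.
by case: ifP => [/h //|_]; exact: Sp0.
Qed.

Lemma top_sum a (A : Type) (s : seq A) (f : A -> M a) j :
  top (\sum_(i <- s) f i) j = \sum_(i <- s) top (f i) j.
Proof.
elim: s => [|x s IH]; first by rewrite !big_nil top0.
by rewrite !big_cons topD IH.
Qed.

Lemma topN a (m : M a) j : top (- m) j = - top m j.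
Proof. by rewrite -scaleN1r topZ mulN1r. Qed.

Lemma Sp_nth d i (hi : (i < size (xs d))%N) : Sp (nth 0 (xs d) i).
Proof. exact: (Sp_gen (exist _ (d, i) hi)). Qed.

Lemma decomp d (w : M d) : exists w' : M d, Sp (w - w') /\ forall j, dg j == d -> crd (ip d w') j = 0.
Proof.
have [sz h2 h3 _] := QP d.
have [c hc] := h3 w.
exists (w - \sum_(0 <= i < size (bs d)) c`_i *: nth 0 (xs d) i); split.
  rewrite opprB addrCA subrr addr0; apply: Sp_sum_seq => i.
  rewrite mem_index_iota => /andP [_ hi]; apply: SpZ; apply: Sp_nth; by rewrite sz.
move=> j hj.
have -> : crd (ip d (w - \sum_(0 <= i < size (bs d)) c`_i *: nth 0 (xs d) i)) j =
   top (w - \sum_(0 <= i < size (bs d)) c`_i *: nth 0 (xs d) i) j by rewrite /top hj.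
rewrite topD topN top_sum hc big_mkord.
under [X in _ - X]eq_bigr => i _ do rewrite topZ (h2 _ (ltn_ord i)).
by rewrite subrr.
Qed.

Definition ltP x y := le x y && (x != y).

Lemma count_strict (A : eqType) (p1 p2 : pred A) (s : seq A) x :
  (forall y, p1 y -> p2 y) -> x \in s -> p2 x -> ~~ p1 x -> (count p1 s < count p2 s)%N.
Proof.
move=> h12 xs hx nx; elim: s xs => [|y s IH] //; rewrite in_cons => /orP [/eqP <-|ys] /=.
  rewrite (negbTE nx) hx add0n add1n ltnS.
  by apply: sub_count.
have := IH ys; case: (p1 y) (@h12 y) => /=; last by move=> _; case: (p2 y) => /= h; rewrite ?add0n ?add1n // ltnS ltnW.
by move=> /(_ isT) -> /=; rewrite !add1n ltnS.
Qed.

Lemma span_claim a (T : seq J) (hT : forall (y : M a) k, crd (ip a y) k != 0 -> k \in T) n :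
  forall j, j \in T -> le (dg j) a -> (count (fun k => ltP (dg k) (dg j)) T < n)%N ->
  Sp (pp (dg j) (g j)).
Proof.
elim: n => [//|n IH] j jT hja hc.
rewrite ltnS in hc.
set d := dg j in hja hc *.
have [w' [hS hw']] := decomp (pp d (g j)).
have -> : pp d (g j) = (pp d (g j) - w') + w' by rewrite subrK.
apply: SpD => //.
rewrite -(@hpi d w') (crd_expand (ip d w')).
rewrite big_mkcond /= (@lin_sum _ _ (pp d)); last exact: hpp.1.
apply: Sp_sum => k; case: ifP => [hk|_]; last by rewrite lin0; [exact: Sp0 | exact: hpp.1].
rewrite (@linZ _ _ (pp _)); last exact: hpp.1.
apply: SpZ.
have hkd : le (dg k) d := crd_le hk.
have hne : dg k != d.
  by apply/eqP => e; move: hk; rewrite hw' ?e ?eqxx.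
have kT : k \in T.
  apply: (hT (pm_map M d a w')); rewrite hip.2 // crd_pm //.
rewrite /G (hpp.2 _ _ _ hkd); apply: (Sp_pm hkd).
apply: (IH k kT (htrans hkd hja)).
apply: (leq_trans _ hc).
apply: (@count_strict _ (fun x => ltP (dg x) (dg k)) (fun x => ltP (dg x) d) T k) => //.
- move=> y /andP [hy1 hy2]; apply/andP; split; first exact: htrans hy1 hkd.
  apply: contra hne => /eqP e; rewrite -e in hkd *.
  by apply/eqP; apply: hanti.
- by rewrite /ltP hkd hne.
- by rewrite /ltP eqxx andbF.
Qed.

Lemma span_all a (y : M a) : Sp y.
Proof.
have [T hT] := supp a.
rewrite -(@hpi a y) (crd_expand (ip a y)).
rewrite big_mkcond /= (@lin_sum _ _ (pp a)); last exact: hpp.1.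
apply: Sp_sum => k; case: ifP => [hk|_]; last by rewrite lin0; [exact: Sp0 | exact: hpp.1].
rewrite (@linZ _ _ (pp _)); last exact: hpp.1.
apply: SpZ.
have hka : le (dg k) a := crd_le hk.
rewrite /G (hpp.2 _ _ _ hka); apply: (Sp_pm hka).
apply: (@span_claim a T hT (count (fun x => ltP (dg x) (dg k)) T).+1) => //.
exact: hT hk.
Qed.

Lemma sum_key (l : seq (I * R)) q0 : uniq (map fst l) -> q0 \in l ->
  \sum_(q <- l | q.1 == q0.1) q.2 = q0.2.
Proof.
elim: l => [//|q l IH] /= /andP [qn ul]; rewrite in_cons => /orP [/eqP ->|q0l].
  rewrite big_cons eqxx big_seq_cond big1 ?addr0 // => q' /andP [q'l /eqP e].
  by move: qn; rewrite -e (map_f fst q'l).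
rewrite big_cons IH //; case: ifP => // /eqP e.
by move: qn; rewrite e (map_f fst q0l).
Qed.

Lemma max_exists (D : seq P) : D != [::] -> exists b, b \in D /\ forall b', b' \in D -> le b b' -> b' = b.
Proof.
elim: D => [//|y D IH] _.
case: D IH => [|z D] IH.
  by exists y; split; [rewrite mem_seq1|move=> b'; rewrite mem_seq1 => /eqP ->].
have [m [mD mmax]] := IH isT.
case: (boolP (le m y)) => hmy.
  exists y; split; first exact: mem_head.
  move=> b'; rewrite in_cons => /orP [/eqP -> //|b'D] hyb'.
  have e := mmax b' b'D (htrans hmy hyb').
  by rewrite e; apply: hanti => //; rewrite -e.
exists m; split; first by rewrite in_cons mD orbT.
move=> b'; rewrite in_cons => /orP [/eqP -> hmy'|b'D]; last exact: mmax.
by move: hmy; rewrite hmy'.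
Qed.

Lemma idx_lt (x : I) : (idx x < size (bs (deg x)))%N.
Proof. by have [sz _ _ _] := QP (deg x); rewrite -sz; exact: (valP x). Qed.

Lemma gen_top (x : I) j : dg j == deg x ->
  crd (ip (deg x) (gen x)) j = nth (@vdef R J) (bs (deg x)) (idx x) j.
Proof.
move=> hj; have [sz h2 _ _] := QP (deg x).
by rewrite -(h2 _ (idx_lt x)) /top hj.
Qed.

Lemma bs_off b i j : (i < size (bs b))%N -> dg j != b -> nth (@vdef R J) (bs b) i j = 0.
Proof.
move=> hi hj; have [sz h2 _ _] := QP b.
by rewrite -(h2 _ hi) /top (negbTE hj).
Qed.

Lemma indep a (l : seq (I * R)) : uniq (map fst l) -> all (fun q => le (deg q.1) a) l ->
  \sum_(q <- l) q.2 *: pm_map M (deg q.1) a (gen q.1) = 0 -> forall q, q \in l -> q.2 = 0.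
Proof.
move=> ul hl h0.
have hc : forall j, \sum_(q <- l) q.2 * crd (ip (deg q.1) (gen q.1)) j = 0.
  move=> j; have := congr1 (fun z => crd (ip a z) j) h0.
  rewrite /= lin0; last exact: hip.1.
  rewrite crd0 (@lin_sum _ _ (ip a)); last exact: hip.1.
  rewrite crd_sum => e; apply: (eq_trans _ e); apply: eq_big_seq => q ql.
  rewrite (@linZ _ _ (ip a)); last exact: hip.1.
  by rewrite crdZ hip.2 ?crd_pm //; exact: (allP hl q ql).
move=> q0 q0l; case: (eqVneq q0.2 0) => // hq0; exfalso.
set D := [seq deg q.1 | q <- l & q.2 != 0].
have Dn : D != [::].
  have : deg q0.1 \in D by apply: map_f; rewrite mem_filter hq0.
  by case: (D).
have [b [bD bmax]] := max_exists Dn.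
move: (bD) => /mapP [q1]; rewrite mem_filter => /andP [hq1 q1l] eb.
have hE : forall j, \sum_(q <- l | deg q.1 == b) q.2 * nth (@vdef R J) (bs b) (idx q.1) j = 0.
  move=> j; case: (eqVneq (dg j) b) => hj.
  - apply: (eq_trans _ (hc j)); rewrite [RHS](bigID (fun q => deg q.1 == b)) /=.
    rewrite [X in _ = _ + X]big_seq_cond [X in _ = _ + X]big1 ?addr0.
      apply: eq_bigr => q /eqP e.
      by rewrite gen_top ?e // hj.
    move=> q /andP [ql hqb].
    case: (eqVneq q.2 0) => [->|hq]; first by rewrite mul0r.
    case: (eqVneq (crd (ip (deg q.1) (gen q.1)) j) 0) => [->|hn]; first by rewrite mulr0.
    have hle := crd_le hn; rewrite hj in hle.
    have e : deg q.1 = b.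
      by apply: bmax => //; apply: map_f; rewrite mem_filter hq ql.
    by rewrite e eqxx in hqb.
  - rewrite big_seq_cond big1 // => q /andP [ql /eqP e].
    by rewrite bs_off ?mulr0 // -e idx_lt.
pose c' := mkseq (fun i => \sum_(q <- l | (deg q.1 == b) && (idx q.1 == i)) q.2) (size (bs b)).
have [_ _ _ h4] := QP b.
have hz := h4 c'.
have key : forall x : I, ((deg x == b) && (idx x == idx q1.1)) = (x == q1.1).
  move=> x; rewrite eb; apply/andP/eqP => [[/eqP e1 /eqP e2]|->] //.
  apply: val_inj; rewrite /deg /idx in e1 e2.
  by rewrite [val x]surjective_pairing [val q1.1]surjective_pairing e1 e2.
have q1lt : (idx q1.1 < size (bs b))%N by rewrite eb idx_lt.
have hyp : forall j, \sum_(i < size (bs b)) c'`_i * nth (@vdef R J) (bs b) i j = 0.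
  move=> j; apply: (eq_trans _ (hE j)).
  under eq_bigr => i _ do rewrite nth_mkseq // mulr_suml.
  rewrite -(@exchange_big_dep _ _ _ _ _ l _ (fun q => deg q.1 == b) (fun q (i : 'I_(size (bs b))) => idx q.1 == i) xpredT) //=.
  apply: eq_bigr => q /eqP e.
  rewrite (eq_bigl (fun i : 'I_(size (bs b)) => i == idx q.1 :> nat)); last by move=> i; rewrite eq_sym.
  rewrite (big_ord1_eq _ (fun i => q.2 * nth (@vdef R J) (bs b) i j)).
  by rewrite -e idx_lt.
have := hz hyp (idx q1.1) q1lt.
rewrite nth_mkseq // (eq_bigl (fun q => q.1 == q1.1)); last by move=> q; rewrite key.
by rewrite sum_key // => e; rewrite e eqxx in hq1.
Qed.

Lemma M_free : graded_free M.
Proof.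
exists (I : eqType), deg, gen; split.
  move=> a x; have [l [hl ->]] := span_all x.
  exists (unzip1 l), (unzip2 l); rewrite zip_unzip; split => //.
  by rewrite all_map.
move=> a s c us sz hs h0.
have hu : uniq (unzip1 (zip s c)) by rewrite unzip1_zip ?sz.
have ha : all (fun q => le (deg q.1) a) (zip s c).
  have : all (fun i => le (deg i) a) (unzip1 (zip s c)) by rewrite unzip1_zip ?sz.
  by rewrite all_map.
have := indep hu ha h0 => hz.
apply/allP => r; rewrite -(unzip2_zip (_ : size c <= size s)%N) ?sz //.
by move=> /mapP [q ql ->]; rewrite hz.
Qed.

End FreePart.

Theorem theorem1p2 (R : idomainType) (hR : PID R)
  (P : zmodType) (le : rel P) (hP : is_lattice_order le) (hc : compatible le)
  (M : @pmod R P le) (hfg : forall a, fg_module (M a)) :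
  graded_projective M <-> graded_free M.
Proof.
case: hP => hrefl hanti htrans _ _.
split.
  move=> [F [i [p [[J [dg [g [Fspan Findep]]]] hi hp hpi]]]].
  exact: (@M_free R hR P le htrans F J dg g Fspan Findep hrefl hanti M i p hi hp hpi hfg).
move=> hM; exists M, (fun a x => x), (fun a x => x); split => //.
Qed.
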